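(* Let $\mathfrak g$ be a finite-dimensional complex Lie algebra, $a\in\mathfrak g^*$, $U\subset\mathfrak g^*$ open, and $\lambda:U\to\mathbb C$ a (locally analytic) function such that for every $x\in U$, $\lambda(x)$ is an eigenvalue of the pencil $\mathcal A_x+\mu\mathcal A_a$. Then $\lambda$ is not constant on any neighbourhood of any point of $U$.
   Context: For $x\in\mathfrak g^*$, $\mathcal A_x$ is the skew form $(\xi,\eta)\mapsto\langle x,[\xi,\eta]\rangle$ on $\mathfrak g$. A number $\lambda_0\in\mathbb C$ is an eigenvalue (characteristic number) of the pencil $\mathcal A_x+\mu\mathcal A_a$ if $\operatorname{rk}(\mathcal A_x-\lambda_0\mathcal A_a)<\max_{\mu}\operatorname{rk}(\mathcal A_x+\mu\mathcal A_a)$, i.e. it is the eigenvalue of a Jordan block in the Jordan–Kronecker decomposition of the pair $(\mathcal A_x,\mathcal A_a)$. *)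

(* Defs.v *)
From HB Require Import structures.
From mathcomp Require Import all_boot all_order all_algebra.
From mathcomp Require Import reals.
From mathcomp.real_closed Require Import complex.
Set Implicit Arguments. Unset Strict Implicit. Unset Printing Implicit Defensive.
Import Order.TTheory GRing.Theory Num.Theory.
Local Open Scope ring_scope.

(* Every n-dimensional Lie algebra over
   K is isomorphic to such a one (choose a basis). *)
Definition is_lie_bracket (K : fieldType) (n : nat)
    (br : 'rV[K]_n -> 'rV[K]_n -> 'rV[K]_n) : Prop :=
  [/\ (forall (c : K) u v w, br (c *: u + v) w = c *: br u w + br v w),
      (forall (c : K) u v w, br w (c *: u + v) = c *: br w u + br w v),
      (forall u, br u u = 0) &
      (forall u v w, br u (br v w) + br v (br w u) + br w (br u v) = 0)].

(* g^* is identified with 'rV[K]_n via the standard pairing <x, xi>. *)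
Definition pairing (K : fieldType) (n : nat) (x xi : 'rV[K]_n) : K :=
  \sum_(k < n) x 0 k * xi 0 k.

(* Gram matrix, in the standard basis e_i of g, of the skew form
   A_x(xi, eta) = <x, [xi, eta]>. Its rank is the rank of the form. *)
Definition formA (K : fieldType) (n : nat)
    (br : 'rV[K]_n -> 'rV[K]_n -> 'rV[K]_n) (x : 'rV[K]_n) : 'M[K]_n :=
  \matrix_(i < n, j < n) pairing x (br (delta_mx 0 i) (delta_mx 0 j)).

(* lambda0 is an eigenvalue of the pencil A_x + mu A_a:
   rk (A_x - lambda0 A_a) < max_mu rk (A_x + mu A_a). *)
Definition pencil_eigenvalue (K : fieldType) (n : nat)
    (br : 'rV[K]_n -> 'rV[K]_n -> 'rV[K]_n) (x a : 'rV[K]_n) (l0 : K) : Prop :=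
  exists mu : K,
    (\rank (formA br x - l0 *: formA br a)%R < \rank (formA br x + mu *: formA br a)%R)%N.

Definition cball (R : realType) (n : nat) (x : 'rV[R[i]]_n) (eps : R)
    (y : 'rV[R[i]]_n) : Prop :=
  forall k : 'I_n, `|y 0 k - x 0 k| < (eps%:C)%C.

Definition copen (R : realType) (n : nat) (U : 'rV[R[i]]_n -> Prop) : Prop :=
  forall x, U x -> exists2 eps : R, 0 < eps & forall y, cball x eps y -> U y.

(* Main.v *)
From Stdlib Require Import Classical.
Require Import Defs.
From HB Require Import structures.
From mathcomp Require Import all_boot all_order all_algebra.
From mathcomp Require Import reals.
From mathcomp.real_closed Require Import complex.
Import Order.TTheory GRing.Theory Num.Theory.
Local Open Scope ring_scope.

Lemma formA_lin (K : fieldType) n (br : 'rV[K]_n -> 'rV[K]_n -> 'rV[K]_n) c x y :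
  formA br (c *: x + y) = c *: formA br x + formA br y.
Proof.
apply/matrixP => i j; rewrite !mxE /pairing mulr_sumr -big_split /=.
by apply: eq_bigr => k _; rewrite !mxE mulrDl mulrA.
Qed.

Lemma rank_ge (K : fieldType) m n r (X : 'M[K]_(r, m)) (M : 'M[K]_(m, n)) Y :
  \det (X *m M *m Y) != 0 -> (r <= \rank M)%N.
Proof.
move=> H; have := mxrank_unit (A := X *m M *m Y); rewrite unitmxE unitfE H => /(_ isT) <-.
apply: leq_trans (mxrankM_maxl _ _) _; exact: mxrankM_maxr.
Qed.

Lemma rank_witness (K : fieldType) m n (M : 'M[K]_(m, n)) :
  exists X : 'M[K]_(\rank M, m), exists Y : 'M[K]_(n, \rank M), \det (X *m M *m Y) != 0.
Proof.
exists (pid_mx (\rank M) *m invmx (col_ebase M)).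
exists (invmx (row_ebase M) *m pid_mx (\rank M)).
set r := \rank M.
have -> : pid_mx r *m invmx (col_ebase M) *m M *m (invmx (row_ebase M) *m pid_mx r) =
  pid_mx r *m invmx (col_ebase M) *m (col_ebase M *m pid_mx r *m row_ebase M) *m (invmx (row_ebase M) *m pid_mx r) by rewrite mulmx_ebase.
rewrite !mulmxA mulmxKV ?col_ebase_unit //.
rewrite -!mulmxA mulKVmx ?row_ebase_unit // !mul_pid_mx.
rewrite ?minnn ?(minn_idPr (rank_leq_row M)) ?(minn_idPr (rank_leq_col M)) ?(minn_idPl (rank_leq_row M)) ?(minn_idPl (rank_leq_col M)) ?minnn.
have -> : minn m r = r by apply/minn_idPr; exact: rank_leq_row.
by rewrite pid_mx_1 det1 oner_eq0.
Qed.

Lemma det_poly (K : fieldType) r (P Q : 'M[K]_r) t :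
  (\det (map_mx polyC P + 'X *: map_mx polyC Q)).[t] = \det (P + t *: Q).
Proof.
rewrite -[_.[t]]/(horner_eval t _) -det_map_mx; congr (\det _); apply/matrixP => i j.
by rewrite !mxE /= horner_evalE hornerD hornerM hornerX !hornerC.
Qed.

Lemma small_t (R : realType) n (p : {poly R[i]}) (d : 'rV[R[i]]_n) (e : R) :
  p != 0 -> 0 < e -> exists t, ~~ root p t /\ forall k, `|t * d 0 k| < (e%:C)%C.
Proof.
move=> pn0 e0.
have s0 : 0 <= \sum_k `|d 0 k| by apply: sumr_ge0 => k _; exact: normr_ge0.
set S := 1 + \sum_k `|d 0 k|.
have Sge : forall k, `|d 0 k| < S.
  move=> k; rewrite /S (bigD1 k) //= addrA.
  have h : 0 <= \sum_(i < n | i != k) `|d 0 i| by apply: sumr_ge0 => i _; exact: normr_ge0.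
  apply: (@lt_le_trans _ _ (1 + `|d 0 k|)); first by rewrite ?ltrDl ?ltrDr ltr01.
  by rewrite lerDl.
have Sp : 0 < S by rewrite /S ltr_pwDl ?ltr01.
have ec : 0 < (e%:C)%C :> R[i] by rewrite ltcR.
set del := (e%:C)%C / S.
have delp : 0 < del by rewrite divr_gt0.
set ts := [seq del / (j.+1)%:R | j <- iota 0 (size p)].
have Hu : uniq ts.
  rewrite map_inj_in_uniq ?iota_uniq // => j k _ _ /= H.
  have : (j.+1)%:R^-1 = (k.+1)%:R^-1 :> R[i].
    by apply: (mulfI (lt0r_neq0 delp)).
  by move/invr_inj/eqP; rewrite eqr_nat => /eqP [].
have : ~~ all (root p) ts.
  apply/negP => Hall; have := max_poly_roots pn0 Hall Hu.
  by rewrite size_map size_iota ltnn.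
case/allPn => t /mapP [j _ ->] Hr; exists (del / (j.+1)%:R); split => // k.
rewrite normrM ger0_norm ?divr_ge0 ?ltW //.
have h1 : del / (j.+1)%:R <= del.
  by rewrite ler_pdivrMr ?ltr0Sn // ler_peMr ?(ltW delp) // ler1n.
apply: le_lt_trans (ler_wpM2r (normr_ge0 _) h1) _.
by rewrite -[(e%:C)%C](divfK (lt0r_neq0 Sp)) -/del ltr_pM2l.
Qed.

Lemma max_rank (K : fieldType) n (f : 'rV[K]_n -> nat) :
  (forall z, (f z <= n)%N) -> exists z, forall z', (f z' <= f z)%N.
Proof.
move=> fb.
have H : forall k, (exists z, forall z', (f z' <= f z)%N) \/ exists z, (k <= f z)%N.
  elim=> [|k [IH|[z Hz]]]; first by right; exists 0.
  - by left.
  - case: (classic (forall z', (f z' <= f z)%N)) => [h|h]; first by left; exists z.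
    right; have [z' Hz'] := not_all_ex_not _ _ h; exists z'.
    by move/negP: Hz'; rewrite -ltnNge => /(leq_trans _); apply.
case: (H n.+1) => // [[z Hz]].
by have := leq_trans Hz (fb z); rewrite ltnn.
Qed.

Lemma cball_mono (R : realType) n (x y : 'rV[R[i]]_n) e e' :
  e <= e' -> cball x e y -> cball x e' y.
Proof. by move=> le h k; apply: lt_le_trans (h k) _; rewrite lecR. Qed.

Theorem lemma2 (R : realType) (n : nat)
    (br : 'rV[R[i]]_n -> 'rV[R[i]]_n -> 'rV[R[i]]_n)
    (a : 'rV[R[i]]_n) (U : 'rV[R[i]]_n -> Prop)
    (lam : 'rV[R[i]]_n -> R[i]) :
  is_lie_bracket br ->
  copen U ->
  (forall x, U x -> pencil_eigenvalue br x a (lam x)) ->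
  forall x0, U x0 -> forall eps : R, 0 < eps ->
    exists y, [/\ U y, cball x0 eps y & lam y != lam x0].
Proof.
move=> _ Uo Hev x0 Ux0 eps eps0.
apply: NNPP => Hn.
have Hc : forall y, U y -> cball x0 eps y -> lam y = lam x0.
  move=> y Uy By; apply: NNPP => H; apply: Hn; exists y; split => //; exact/eqP.
have [e1 e10 He1] := Uo x0 Ux0.
set e := Order.min eps e1.
have e0 : 0 < e by rewrite lt_min eps0 e10.
have [lee1 lee2] : e <= eps /\ e <= e1 by have := le_refl e; rewrite {2}/e le_min => /andP.
set c := lam x0.
pose A := formA br.
have [z Hz] := @max_rank _ _ (fun z => \rank (A z)) (fun z => rank_leq_row _).
have [X [Y HXY]] := @rank_witness _ _ _ (A z).
move: X Y HXY; move Er : (\rank (A z)) => r X Y HXY.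
set w := x0 - c *: a.
set d := z - w.
set p := \det (map_mx polyC (X *m A w *m Y) + 'X *: map_mx polyC (X *m A d *m Y)).
have pn0 : p != 0.
  apply/negP => /eqP p0; move: HXY.
  have hz : A w + A d = A z by rewrite -[A w]scale1r -formA_lin scale1r /d addrC subrK.
  have -> : X *m A z *m Y = X *m A w *m Y + 1 *: (X *m A d *m Y).
    by rewrite scale1r -hz mulmxDr mulmxDl.
  rewrite -det_poly.
  by rewrite /p in p0; rewrite p0 horner0 eqxx.
have [t [Ht Hb]] := @small_t _ _ _ d _ pn0 e0.
set y := x0 + t *: d.
have By : cball x0 e y.
  by move=> k; rewrite /y !mxE addrC addrK; have := Hb k; rewrite /d !mxE.
have Uy : U y by apply: He1; apply: cball_mono By.
have ly : lam y = c by apply: Hc => //; apply: cball_mono By.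
have [mu Hmu] := Hev y Uy; rewrite ly in Hmu.
have E1 : A y - c *: A a = A w + t *: A d.
  rewrite /A /y /w [x0 + _]addrC (@formA_lin _ _ br t d x0) [x0 - _]addrC -(scaleNr c a) (@formA_lin _ _ br (- c) a x0) scaleNr.
  by rewrite [LHS]addrC [t *: _ + _]addrC addrA.
have Hge : (r <= \rank (A y - c *: A a)%R)%N.
  apply: (@rank_ge _ _ _ _ X (A y - c *: A a)%R Y).
  rewrite E1 mulmxDr mulmxDl -scalemxAr -scalemxAl -det_poly -/p.
  exact: Ht.
have E2 : A y + mu *: A a = A (mu *: a + y) by rewrite /A (@formA_lin _ _ br mu a y) addrC.
move: Hmu; rewrite E2 ltnNge.
by rewrite (leq_trans (Hz _)) // Er.
Qed.
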